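(* Let $X$ be a well-filtered coherent space. If $X\times X$ is a Fréchet space, then $X$ is sober.
   Context: Spaces are $T_0$; the specialization order is $x\le y$ iff $x\in\overline{\{y\}}$, and a subset is saturated if it is an upper set in this order. $X$ is well-filtered if for every filtered family $\mathcal F$ of compact saturated subsets and every open $U$, $\bigcap\mathcal F\subseteq U$ implies $F\subseteq U$ for some $F\in\mathcal F$. $X$ is coherent if the intersection of any two compact saturated subsets is compact. A space is Fréchet if whenever $x$ lies in the closure of a set $A$, some sequence in $A$ converges to $x$. A $T_0$ space is sober if every irreducible closed set equals $\overline{\{x\}}$ for some point $x$. *)

(* Defs.v *)
From HB Require Import structures.
From mathcomp Require Import all_boot all_order.
From mathcomp Require Import all_classical.
From mathcomp Require Import topology.
Set Implicit Arguments. Unset Strict Implicit. Unset Printing Implicit Defensive.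
Local Open Scope classical_set_scope.

Section NonHausdorff.
Context {T : topologicalType}.

Definition spec_le (x y : T) : Prop := closure [set y] x.

Definition saturated (A : set T) : Prop :=
  forall x y, A x -> spec_le x y -> A y.

Definition compact_saturated (A : set T) : Prop := compact A /\ saturated A.

Definition filtered_cs_family (F : set (set T)) : Prop :=
  [/\ F !=set0,
      (forall A, F A -> compact_saturated A) &
      (forall A B, F A -> F B -> exists2 C, F C & C `<=` A `&` B)].

Definition well_filtered : Prop :=
  forall (F : set (set T)) (U : set T), filtered_cs_family F -> open U ->
    \bigcap_(A in F) A `<=` U -> exists2 A, F A & A `<=` U.

Definition coherent : Prop :=
  forall A B : set T, compact_saturated A -> compact_saturated B ->
    compact (A `&` B).

(* Frechet(-Urysohn): closure points are limits of sequences from the set *)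
Definition frechet_space : Prop :=
  forall (A : set T) (x : T), closure A x ->
    exists u : nat -> T, (forall n, A (u n)) /\ (u @ \oo --> x).

Definition irreducible_closed (A : set T) : Prop :=
  [/\ closed A, A !=set0 &
      forall B C : set T, closed B -> closed C -> A `<=` B `|` C ->
        A `<=` B \/ A `<=` C].

Definition sober : Prop :=
  forall A : set T, irreducible_closed A -> exists x : T, A = closure [set x].

End NonHausdorff.

(* Main.v *)
Require Import Defs.
From mathcomp Require Import all_boot all_order all_classical topology.
Set Implicit Arguments. Unset Strict Implicit.
Local Open Scope classical_set_scope.

Section Helpers.
Context {T : topologicalType}.

Lemma open_up (U : set T) x y : open U -> U x -> spec_le x y -> U y.
Proof.
move=> oU Ux le; have /le [z [-> ]] // : nbhs x U.
by apply: open_nbhs_nbhs; split.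
Qed.

Lemma spec_refl (x : T) : spec_le x x.
Proof. exact: subset_closure. Qed.

Lemma spec_trans (x y z : T) : spec_le x y -> spec_le y z -> spec_le x z.
Proof.
move=> lxy lyz B; rewrite nbhsE => -[B' [oB' B'x] sB].
exists z; split => //; apply: sB; apply: (open_up oB' _ lyz).
exact: (open_up oB' B'x lxy).
Qed.

Definition up (K : set T) := [set y | exists2 x, K x & spec_le x y].

Lemma up_sat K : saturated (up K).
Proof. move=> x y [z Kz lzx] lxy; exists z => //; exact: spec_trans lxy. Qed.

Lemma sub_up K : K `<=` up K.
Proof. by move=> x Kx; exists x => //; exact: spec_refl. Qed.

Lemma compact_up K : compact K -> compact (up K).
Proof.
move=> cK; apply/compact_near_coveringP => I F P FF cov.
have H : \forall i \near F, K `<=` (fun x => forall y, spec_le x y -> P i y).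
  apply: ((compact_near_coveringP K).1 cK I F
   (fun i x => forall y, spec_le x y -> P i y) FF) => x Kx.
  have := cov x (sub_up Kx).
  case=> [[U E] [/= nU FE] sub].
  move: nU; rewrite nbhsE => -[U' [oU' U'x] sU'].
  exists (U', E); first by split => //; apply: open_nbhs_nbhs.
  move=> [x' i] [/= U'x' Ei] y le; apply: (sub (y, i)); split => //=.
  by apply: sU'; exact: (open_up oU' U'x' le).
by apply: filterS H => i Hi y [x Kx le]; exact: Hi x Kx y le.
Qed.

Definition tail (v : nat -> T) (m : T) (n : nat) :=
  [set y | y = m \/ exists2 k, (n <= k)%N & y = v k].

Lemma compact_tail (v : nat -> T) m n : v @ \oo --> m -> compact (tail v m n).
Proof.
move=> cv; apply/compact_near_coveringP => I F P FF cov.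
have pt x : tail v m n x -> \forall i \near F, P i x.
  move=> /cov [[U E] [/= nU FE] sub]; apply: filterS FE => i Ei.
  by apply: (sub (x, i)); split => //=; exact: nbhs_singleton.
have := cov m (or_introl erefl).
case=> [[U E] [/= nU FE] sub].
have := cv _ nU; case=> N _ HN.
have fin : forall M, \forall i \near F, forall k, (n <= k)%N -> (k < M)%N -> P i (v k).
  elim=> [|M IH]; first by apply: filterE.
  have [nM|nM] := boolP (n <= M)%N.
    have := pt (v M) (or_intror (ex_intro2 _ _ M nM erefl)).
    move=> H; near=> i => k nk; rewrite ltnS leq_eqVlt => /orP [/eqP ->|kM].
      exact: (near H i).
    exact: (near IH i).
  near=> i => k nk; rewrite ltnS => kM; have // := leq_trans nk kM.
  by rewrite (negbTE nM).
have := fin N; move=> H; near=> i => y [->|[k nk ->]].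
  by apply: (sub (m, i)); split => //=; [exact: nbhs_singleton|exact: (near FE i)].
have [kN|Nk] := ltnP k N; first exact: (near H i).
by apply: (sub (v k, i)); split => //=; [exact: HN|exact: (near FE i)].
Unshelve. all: end_near.
Qed.

End Helpers.

Section Main.
Context {X : topologicalType}.

Lemma lim_up (v : nat -> X) w a : v @ \oo --> w ->
  (forall n, up (tail v w n) a) -> spec_le w a.
Proof.
move=> cw H; have [//|nwa] := pselect (spec_le w a).
have Hk n : exists2 k, (n <= k)%N & spec_le (v k) a.
  by case: (H n) => y [->|[k nk ->]] le; [contradiction|exists k].
move=> B; rewrite nbhsE => -[B' [oB' B'w] sB].
have := cw _ (open_nbhs_nbhs (conj oB' B'w)); case=> N _ HN.
case: (Hk N) => k Nk le; exists a; split => //; apply: sB.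
exact: (open_up oB' (HN k Nk) le).
Qed.

Lemma tail_mono (v : nat -> X) w n p : (n <= p)%N -> tail v w p `<=` tail v w n.
Proof.
by move=> np y [->|[k pk ->]]; [left|right; exists k => //; exact: leq_trans pk].
Qed.

Lemma up_mono (A B : set X) : A `<=` B -> up A `<=` up B.
Proof. by move=> AB y [x Ax le]; exists x => //; exact: AB. Qed.

Lemma directed_irr : @well_filtered X -> @coherent X -> @frechet_space (X * X)%type ->
  forall A : set X, irreducible_closed A -> forall m m' : X, A m -> A m' ->
  exists z : X, [/\ A z, spec_le m z & spec_le m' z].
Proof.
move=> wf coh fr A [cA nA irr] m m' Am Am'.
apply: contrapT => nz.
pose D := [set p : X * X | A p.1 /\ p.1 = p.2].
have cl : closure D (m, m').
  move=> B nB; case: nB => [[U V] [/= nU nV] sUV].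
  move: nU nV; rewrite !nbhsE => -[U' [oU' U'm] sU'] [V' [oV' V'm] sV'].
  have [a [Aa [U'a V'a]]] : exists a, A a /\ U' a /\ V' a.
    apply: contrapT => H.
    have : A `<=` ~` U' `|` ~` V'.
      move=> a Aa; have [U'a|] := pselect (U' a); last by left.
      by right => V'a; apply: H; exists a.
    by case/(irr _ _ (open_closedC oU') (open_closedC oV')) => [/(_ m Am)|/(_ m' Am')].
  exists (a, a); split; first by split.
  by apply: sUV; split; [apply: sU'|apply: sV'].
have [u [Du cu]] := fr _ _ cl.
pose v k := (u k).1.
have Av k : A (v k) by case: (Du k).
have cv1 : v @ \oo --> m.
  move=> U nU.
  have : nbhs (m, m') [set p : X * X | U p.1].
    exists (U, setT) => //=; first by split => //; exact: filterT.
    by move=> [a b] [].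
  move=> /cu; case=> N _ HN; exists N => // k Nk; exact: HN.
have cv2 : v @ \oo --> m'.
  move=> U nU.
  have : nbhs (m, m') [set p : X * X | U p.2].
    exists (setT, U) => //=; first by split => //; exact: filterT.
    by move=> [a b] [].
  move=> /cu; case=> N _ HN; exists N => // k Nk; have /= := HN k Nk.
  by rewrite -(Du k).2.
pose K n := up (tail v m n) `&` up (tail v m' n).
pose F := [set C | exists n, C = K n].
have fam : filtered_cs_family F.
  split.
  - by exists (K 0); exists 0.
  - move=> C [n ->]; split.
      apply: coh; split; try exact: up_sat.
        by apply: compact_up; apply: compact_tail.
      by apply: compact_up; apply: compact_tail.
    by move=> x y [h1 h2] le; split; apply: up_sat le.
  - move=> C C' [n ->] [p ->]; exists (K (maxn n p)); first by exists (maxn n p).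
    move=> y [h1 h2]; split; split.
    + by apply: (up_mono _ h1); apply: tail_mono; rewrite leq_maxl.
    + by apply: (up_mono _ h2); apply: tail_mono; rewrite leq_maxl.
    + by apply: (up_mono _ h1); apply: tail_mono; rewrite leq_maxr.
    + by apply: (up_mono _ h2); apply: tail_mono; rewrite leq_maxr.
have sub : \bigcap_(C in F) C `<=` ~` A.
  move=> a Ha Aa; apply: nz; exists a; split => //.
    by apply: (lim_up cv1) => n; case: (Ha (K n) (ex_intro _ n erefl)).
  by apply: (lim_up cv2) => n; case: (Ha (K n) (ex_intro _ n erefl)).
have [C [n ->] sC] := wf F (~` A) fam (closed_openC cA) sub.
apply: (sC (v n)) (Av n).
by split; exists (v n); try exact: spec_refl; right; exists n.
Qed.

End Main.

Theorem corollary3p11 (X : topologicalType) :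
  @kolmogorov_space X -> @well_filtered X -> @coherent X ->
  @frechet_space (X * X)%type -> @sober X.
Proof.
move=> _ wf coh fr A irrA; have [cA [a0 Aa0] irr] := irrA.
have [x [Ax Hx]] : exists x, A x /\ forall a, A a -> spec_le a x.
  apply: contrapT => nx.
  pose F := [set C | exists2 a, A a & C = up [set a]].
  have fam : filtered_cs_family F.
    split.
    - by exists (up [set a0]); exists a0.
    - move=> C [a Aa ->]; split; [apply: compact_up; exact: compact_set1|exact: up_sat].
    - move=> C C' [a Aa ->] [b Ab ->].
      have [z [Az la lb]] := directed_irr wf coh fr irrA Aa Ab.
      exists (up [set z]); first by exists z.
      move=> y [_ -> lzy]; split.
        by exists a => //; exact: spec_trans lzy.
      by exists b => //; exact: spec_trans lzy.
  have sub : \bigcap_(C in F) C `<=` ~` A.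
    move=> y Hy Ay; apply: nx; exists y; split => // a Aa.
    by have [_ -> ] := Hy (up [set a]) (ex_intro2 _ _ a Aa erefl).
  have [C [a Aa ->] sC] := wf F (~` A) fam (closed_openC cA) sub.
  by apply: (sC a (sub_up _)) Aa.
exists x; apply/seteqP; split => y; first by move=> Ay; exact: Hx.
move=> cy; rewrite ((closure_id A).1 cA).
by apply: (closureS _ cy) => z ->.
Qed.
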